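(* Let $M\in\mathbb{R}^{m\times k}$ and let $P\in\mathbb{R}^{k\times k}$ be a projector along $\ker M$. Let $f:\mathbb{R}^m\times\mathbb{R}^n\to\mathbb{R}^m$ be continuous and strongly monotone with respect to $x$, and let $r:\mathbb{R}^n\to\mathbb{R}^k$ be continuous. Then there is a continuous function $g:\mathbb{R}^n\to\mathbb{R}^k$ such that for all $z\in\mathbb{R}^k$ and $y\in\mathbb{R}^n$: $M^\top f(Mz,y)+P^\top r(y)=0$ if and only if $Pz=g(y)$.
   Context: $f(x,y)$ is strongly monotone with respect to $x$ if there is $c>0$ such that $\langle f(x,y)-f(\bar x,y),x-\bar x\rangle\ge c\|x-\bar x\|^2$ for all $y\in\mathbb{R}^n$ and $x,\bar x\in\mathbb{R}^m$. A projector along $\ker M$ is a matrix $P$ with $P^2=P$ and $\ker P=\ker M$. *)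

(* Defs.v *)
From HB Require Import structures.
From mathcomp Require Import all_boot all_order all_algebra.
From mathcomp Require Import all_classical all_reals all_analysis.
Set Implicit Arguments. Unset Strict Implicit. Unset Printing Implicit Defensive.
Import Order.TTheory GRing.Theory Num.Theory.
Import numFieldNormedType.Exports.
Local Open Scope ring_scope.

Definition dotv (R : realType) (m : nat) (u v : 'cV[R]_m) : R :=
  \sum_(i < m) u i 0 * v i 0.

Definition sqnorm (R : realType) (m : nat) (u : 'cV[R]_m) : R := dotv u u.

Definition strongly_monotone_x (R : realType) (m n : nat)
  (f : 'cV[R]_m -> 'cV[R]_n -> 'cV[R]_m) : Prop :=
  exists c : R, 0 < c /\
    forall (y : 'cV[R]_n) (x xb : 'cV[R]_m),
      dotv (f x y - f xb y) (x - xb) >= c * sqnorm (x - xb).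

Definition projector_along_ker (R : realType) (m k : nat)
  (M : 'M[R]_(m, k)) (P : 'M[R]_k) : Prop :=
  P *m P = P /\ forall z : 'cV[R]_k, P *m z = 0 <-> M *m z = 0.

(* Main.v *)
Require Import Defs.
From HB Require Import structures.
From mathcomp Require Import all_boot all_order all_algebra.
From mathcomp Require Import all_classical all_reals all_analysis.
From mathcomp Require Import ring lra.
Import Order.TTheory GRing.Theory Num.Theory.
Import numFieldNormedType.Exports.
Local Open Scope ring_scope.
Set Implicit Arguments. Unset Strict Implicit. Unset Printing Implicit Defensive.

Lemma sq_le {R : realType} (a b : R) : 0 <= a -> a <= b -> a ^+ 2 <= b ^+ 2.
Proof. move=> a0 ab; nra. Qed.
Lemma sq_lt_inv {R : realType} (a b : R) : 0 <= b -> a ^+ 2 < b ^+ 2 -> a < b.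
Proof. move=> b0 h; case: (ltP a b) => // ba; nra. Qed.

Lemma dotvDl {R : realType} p (u u' v : 'cV[R]_p) :
  dotv (u + u') v = dotv u v + dotv u' v.
Proof. by rewrite /dotv -big_split; apply: eq_bigr => i _; rewrite mxE mulrDl. Qed.

Lemma dotvNl {R : realType} p (u v : 'cV[R]_p) : dotv (- u) v = - dotv u v.
Proof. by rewrite /dotv -sumrN; apply: eq_bigr => i _; rewrite mxE mulNr. Qed.

Lemma dotvC {R : realType} p (u v : 'cV[R]_p) : dotv u v = dotv v u.
Proof. by rewrite /dotv; apply: eq_bigr => i _; rewrite mulrC. Qed.

Lemma dotvBl {R : realType} p (u u' v : 'cV[R]_p) :
  dotv (u - u') v = dotv u v - dotv u' v.
Proof. by rewrite dotvDl dotvNl. Qed.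

Lemma dotvBr {R : realType} p (u v v' : 'cV[R]_p) :
  dotv u (v - v') = dotv u v - dotv u v'.
Proof. by rewrite dotvC dotvBl (dotvC u v) (dotvC u v'). Qed.

Lemma dotvDr {R : realType} p (u v v' : 'cV[R]_p) :
  dotv u (v + v') = dotv u v + dotv u v'.
Proof. by rewrite dotvC dotvDl (dotvC u v) (dotvC u v'). Qed.

Lemma dotv0l {R : realType} p (v : 'cV[R]_p) : dotv 0 v = 0.
Proof. by rewrite /dotv big1 // => i _; rewrite mxE mul0r. Qed.

Lemma dotvE {R : realType} p (u v : 'cV[R]_p) : dotv u v = (u^T *m v) 0 0.
Proof. by rewrite /dotv mxE; apply: eq_bigr => i _; rewrite mxE. Qed.

Lemma dotv_tr {R : realType} p q (A : 'M[R]_(p, q)) (a : 'cV[R]_p) (b : 'cV[R]_q) :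
  dotv (A^T *m a) b = dotv a (A *m b).
Proof. by rewrite !dotvE trmx_mul trmxK mulmxA. Qed.

Lemma sq_ge0 {R : realType} p (v : 'cV[R]_p) : 0 <= sqnorm v.
Proof. by rewrite /sqnorm /dotv; apply: sumr_ge0 => i _; rewrite -expr2 sqr_ge0. Qed.

Lemma sq_entry {R : realType} p (v : 'cV[R]_p) i : v i 0 ^+ 2 <= sqnorm v.
Proof.
rewrite /sqnorm /dotv (bigD1 i) //= -expr2 lerDl.
by apply: sumr_ge0 => j _; rewrite -expr2 sqr_ge0.
Qed.

Lemma sq_eq0 {R : realType} p (v : 'cV[R]_p) : sqnorm v <= 0 -> v = 0.
Proof.
move=> h; apply/matrixP => i j; rewrite (ord1 j) mxE.
have := sq_entry v i => h2.
have : v i 0 ^+ 2 = 0 by apply/eqP; rewrite eq_le sqr_ge0 andbT (le_trans h2 h).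
by move/eqP; rewrite sqrf_eq0 => /eqP.
Qed.

Lemma amgm {R : realType} p (a b : 'cV[R]_p) t : 0 < t ->
  2 * dotv a b <= t * sqnorm a + sqnorm b / t.
Proof.
move=> t0; rewrite /sqnorm /dotv mulr_sumr mulr_sumr mulr_suml -big_split /=.
apply: ler_sum => i _.
set x := a i 0; set y := b i 0.
have -> : t * (x * x) + y * y / t = 2 * (x * y) + (t * x - y) ^+ 2 / t.
  by field; rewrite gt_eqF.
by rewrite lerDl divr_ge0 ?sqr_ge0 // ltW.
Qed.

Lemma sqD2 {R : realType} p (a b : 'cV[R]_p) :
  sqnorm (a + b) <= 2 * sqnorm a + 2 * sqnorm b.
Proof.
rewrite /sqnorm /dotv !mulr_sumr -big_split /=; apply: ler_sum => i _.
rewrite mxE; set x := a i 0; set y := b i 0.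
have := sqr_ge0 (x - y); nra.
Qed.

Lemma CS {R : realType} p (a v : 'I_p -> R) :
  (\sum_j a j * v j) ^+ 2 <= (\sum_j a j ^+ 2) * (\sum_j v j ^+ 2).
Proof.
have H1 : (\sum_j a j * v j) ^+ 2 = \sum_i \sum_j (a i * v i) * (a j * v j).
  by rewrite expr2 mulr_suml; apply: eq_bigr => i _; rewrite mulr_sumr.
have H2 : (\sum_j a j ^+ 2) * (\sum_j v j ^+ 2) = \sum_i \sum_j a i ^+ 2 * v j ^+ 2.
  by rewrite mulr_suml; apply: eq_bigr => i _; rewrite mulr_sumr.
have H3 : (\sum_j a j ^+ 2) * (\sum_j v j ^+ 2) = \sum_i \sum_j a j ^+ 2 * v i ^+ 2.
  by rewrite H2 exchange_big.
rewrite -(@ler_pM2l _ 2) // [X in _ <= X]mulr_natl [X in _ <= X]mulr2n [X in _ <= X + _]H2 H3 H1.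
rewrite mulr_natl mulr2n -!big_split /=; apply: ler_sum => i _; rewrite -!big_split /=.
apply: ler_sum => j _.
have := sqr_ge0 (a i * v j - a j * v i); nra.
Qed.

Lemma lin_bound {R : realType} p q (A : 'M[R]_(p, q)) :
  exists2 K, 0 <= K & forall v, sqnorm (A *m v) <= K * sqnorm v.
Proof.
exists (\sum_i \sum_j A i j ^+ 2).
  by apply: sumr_ge0 => i _; apply: sumr_ge0 => j _; apply: sqr_ge0.
move=> v; rewrite /sqnorm /dotv mulr_suml; apply: ler_sum => i _.
rewrite -expr2 mxE.
have -> : \sum_j v j 0 * v j 0 = \sum_j v j 0 ^+ 2 by apply: eq_bigr => j _; rewrite expr2.
exact: (CS (fun j => A i j) (fun j => v j 0)).
Qed.

Lemma dotv_split {R : realType} a b (v w : 'cV[R]_(a + b)) :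
  dotv v w = dotv (usubmx v) (usubmx w) + dotv (dsubmx v) (dsubmx w).
Proof. by rewrite /dotv big_split_ord; congr (_ + _); apply: eq_bigr => i _; rewrite !mxE. Qed.

Lemma usubmxB {R : realType} a b n (A B : 'M[R]_(a + b, n)) :
  usubmx (A - B) = usubmx A - usubmx B.
Proof. by apply/matrixP => i j; rewrite !mxE. Qed.

Lemma dsubmxB {R : realType} a b n (A B : 'M[R]_(a + b, n)) :
  dsubmx (A - B) = dsubmx A - dsubmx B.
Proof. by apply/matrixP => i j; rewrite !mxE. Qed.

Lemma col_mxB' {R : realType} a b n (A1 B1 : 'M[R]_(a, n)) (A2 B2 : 'M[R]_(b, n)) :
  col_mx A1 A2 - col_mx B1 B2 = col_mx (A1 - B1) (A2 - B2).
Proof. by rewrite opp_col_mx add_col_mx. Qed.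

Lemma sq_dsub {R : realType} a b (v : 'cV[R]_(a + b)) : sqnorm (dsubmx v) <= sqnorm v.
Proof. by rewrite [X in _ <= X]/sqnorm dotv_split lerDr sq_ge0. Qed.

Lemma sq_usub {R : realType} a b (v : 'cV[R]_(a + b)) : sqnorm (usubmx v) <= sqnorm v.
Proof. by rewrite [X in _ <= X]/sqnorm dotv_split lerDl sq_ge0. Qed.

Lemma dotv1 {R : realType} (x y : 'cV[R]_1) : dotv x y = x 0 0 * y 0 0.
Proof. by rewrite /dotv big_ord1. Qed.

Lemma sol_bound {R : realType} p (F1 F2 : 'cV[R]_p -> 'cV[R]_p) c x1 x2 :
  0 < c -> (forall x x', c * sqnorm (x - x') <= dotv (F1 x - F1 x') (x - x')) ->
  F1 x1 = 0 -> F2 x2 = 0 ->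
  sqnorm (x1 - x2) <= sqnorm (F1 x2 - F2 x2) / c ^+ 2.
Proof.
move=> c0 mono e1 e2.
have h := mono x1 x2; rewrite e1 -[0]e2 in h.
have ci : 0 < c^-1 by rewrite invr_gt0.
have h2 := amgm (F2 x2 - F1 x2) (x1 - x2) ci.
have -> : sqnorm (F1 x2 - F2 x2) = sqnorm (F2 x2 - F1 x2).
  by rewrite /sqnorm -opprB dotvNl dotvC dotvNl opprK.
move: h h2; set s := sqnorm (x1 - x2); set t := sqnorm (F2 x2 - F1 x2).
set d := dotv _ _ => h h2.
rewrite invrK in h2.
have -> : t / c ^+ 2 = (t / c) / c by rewrite expr2 invfM mulrA.
rewrite ler_pdivlMr //.
have -> : t / c = c^-1 * t by rewrite mulrC.
lra.
Qed.

Definition econt {R : realType} p q (F : 'cV[R]_p -> 'cV[R]_q) :=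
  forall x e, 0 < e -> exists2 d, 0 < d &
    forall x', sqnorm (x' - x) < d -> sqnorm (F x' - F x) < e.

Lemma econt_comp {R : realType} p q s (F : 'cV[R]_q -> 'cV[R]_s) (G : 'cV[R]_p -> 'cV[R]_q) :
  econt F -> econt G -> econt (fun x => F (G x)).
Proof.
move=> hF hG x e e0.
have [d1 d10 h1] := hF (G x) e e0.
have [d2 d20 h2] := hG x d1 d10.
by exists d2 => // x' hx; apply: h1; apply: h2.
Qed.

Lemma econt_lin {R : realType} p q (A : 'M[R]_(q, p)) : econt (fun x => A *m x).
Proof.
move=> x e e0; have [K K0 hK] := lin_bound A.
have K1 : 0 < K + 1 by lra.
exists (e / (K + 1)); first by rewrite divr_gt0.
move=> x' hx; rewrite -mulmxBr; apply: le_lt_trans (hK _) _.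
have s0 := sq_ge0 (x' - x).
move: hx; rewrite ltr_pdivlMr // => hx.
nra.
Qed.

Lemma econt_cst {R : realType} p q (c : 'cV[R]_q) : econt (fun _ : 'cV[R]_p => c).
Proof.
move=> x e e0; exists 1 => // x' _; rewrite subrr /sqnorm /dotv big1 // => i _.
by rewrite mxE mul0r.
Qed.

Lemma econt_add {R : realType} p q (F G : 'cV[R]_p -> 'cV[R]_q) :
  econt F -> econt G -> econt (fun x => F x + G x).
Proof.
move=> hF hG x e e0.
have e4 : 0 < e / 4 by rewrite divr_gt0.
have [d1 d10 h1] := hF x _ e4.
have [d2 d20 h2] := hG x _ e4.
exists (Num.min d1 d2); first by rewrite lt_min d10 d20.
move=> x'; rewrite lt_min => /andP[hx1 hx2].
have -> : F x' + G x' - (F x + G x) = (F x' - F x) + (G x' - G x).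
  by rewrite opprD addrACA.
apply: le_lt_trans (sqD2 _ _) _.
have := h1 _ hx1; have := h2 _ hx2; lra.
Qed.

Lemma entry_norm {R : realType} p (v : 'cV[R]_p) i : `|v i 0| <= `|v|.
Proof.
change (`|v i 0| <= mx_norm v); rewrite mx_normrE.
exact: (le_bigmax _ (fun ij : 'I_p * 'I_1 => `|v ij.1 ij.2|) (i, 0)).
Qed.

Lemma norm_sq {R : realType} p (v : 'cV[R]_p) : `|v| ^+ 2 <= sqnorm v.
Proof.
have h : `|v| <= Num.sqrt (sqnorm v).
  change (mx_norm v <= Num.sqrt (sqnorm v)); rewrite mx_normrE.
  apply: bigmax_le => [|[i j] _] /=; first exact: sqrtr_ge0.
  rewrite (ord1 j) -sqrtr_sqr; apply: ler_wsqrtr; exact: sq_entry.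
have h0 : 0 <= `|v| := normr_ge0 _.
have := sqr_sqrtr (sq_ge0 v); set r := Num.sqrt _ => hr.
rewrite -hr; exact: sq_le.
Qed.

Lemma sq_norm {R : realType} p (v : 'cV[R]_p) : sqnorm v <= p%:R * `|v| ^+ 2.
Proof.
rewrite /sqnorm /dotv.
apply: le_trans (_ : \sum_(i < p) `|v| ^+ 2 <= _).
  apply: ler_sum => i _; rewrite -expr2 -real_normK ?num_real //.
  exact: sq_le (normr_ge0 _) (entry_norm v i).
by rewrite sumr_const card_ord mulr_natl.
Qed.

Lemma lib_econt {R : realType} p q (F : 'cV[R]_p -> 'cV[R]_q) :
  continuous F -> econt F.
Proof.
move=> Fc x e e0.
set Q : R := q%:R.
have Q0 : 0 <= Q by rewrite ler0n.
have Q1 : 0 < Q + 1 by lra.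
set eta := Num.min 1 (e / (Q + 1)).
have eta0 : 0 < eta by rewrite lt_min ltr01 divr_gt0.
have eta1 : eta <= 1 by rewrite ge_min lexx.
have eta2 : (Q + 1) * eta <= e.
  by rewrite mulrC -ler_pdivlMr // ge_min lexx orbT.
have := Fc x; move=> /cvgrPdist_lt /(_ eta eta0) /nbhs_ballP [r r0 hr].
exists (r ^+ 2); first by rewrite exprn_gt0.
move=> x' hx.
have hb : ball x r x'.
  rewrite -ball_normE /ball_ /= distrC.
  apply: sq_lt_inv (ltW r0) _; exact: le_lt_trans (norm_sq _) hx.
have := hr _ hb; rewrite /= distrC => hn.
apply: le_lt_trans (sq_norm _) _.
have key : forall n : R, 0 <= n -> n < eta -> Q * n ^+ 2 < e.
  move=> n n0 hn0; have h1 : n ^+ 2 <= eta by nra.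
  have h2 : Q * n ^+ 2 <= Q * eta by rewrite ler_wpM2l.
  nra.
exact: key (normr_ge0 _) hn.
Qed.

Lemma econt_lib {R : realType} p q (F : 'cV[R]_p -> 'cV[R]_q) :
  econt F -> continuous F.
Proof.
move=> Fc x; apply/(@cvgrPdist_lt _ _ _ _ (nbhs_filter x)) => e e0.
have [d d0 hd] := Fc x (e ^+ 2) (exprn_gt0 _ e0).
set P : R := p%:R.
have P0 : 0 <= P by rewrite ler0n.
have P1 : 0 < P + 1 by lra.
set eta := Num.min 1 (d / (P + 1)).
have eta0 : 0 < eta by rewrite lt_min ltr01 divr_gt0.
have eta1 : eta <= 1 by rewrite ge_min lexx.
have eta2 : (P + 1) * eta <= d.
  by rewrite mulrC -ler_pdivlMr // ge_min lexx orbT.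
apply/nbhs_ballP; exists eta => // x'.
rewrite -ball_normE /ball_ /= distrC => hb.
have hs : sqnorm (x' - x) < d.
  apply: le_lt_trans (sq_norm _) _; rewrite -/P.
  have key : forall n : R, 0 <= n -> n < eta -> P * n ^+ 2 < d.
    move=> n n0 hn0; have h1 : n ^+ 2 <= eta by nra.
    have h2 : P * n ^+ 2 <= P * eta by rewrite ler_wpM2l.
    nra.
  exact: key (normr_ge0 _) hb.
have := hd _ hs; rewrite distrC => h.
apply: sq_lt_inv (ltW e0) _; exact: le_lt_trans (norm_sq _) h.
Qed.

Lemma econt1_lib {R : realType} (h : R -> R) :
  (forall t e, 0 < e -> exists2 d, 0 < d & forall s, (s - t) ^+ 2 < d -> (h s - h t) ^+ 2 < e) ->
  continuous h.
Proof.
move=> hc t; apply/(@cvgrPdist_lt _ _ _ _ (nbhs_filter t)) => e e0.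
have [d d0 hd] := hc t (e ^+ 2) (exprn_gt0 _ e0).
set eta := Num.min 1 d.
have eta0 : 0 < eta by rewrite lt_min ltr01 d0.
have eta1 : eta <= 1 by rewrite ge_min lexx.
have eta2 : eta <= d by rewrite ge_min lexx orbT.
apply/nbhs_ballP; exists eta => // s.
rewrite -ball_normE /ball_ /= => hb.
have hs : (s - t) ^+ 2 < d.
  rewrite -real_normK ?num_real // distrC.
  have key : forall n : R, 0 <= n -> n < eta -> n ^+ 2 < d.
    move=> n n0 hn0; nra.
  exact: key (normr_ge0 _) hb.
have := hd _ hs; rewrite -real_normK ?num_real // distrC => h1.
exact: sq_lt_inv (ltW e0) h1.
Qed.

Lemma exists_zero {R : realType} d : forall (F : 'cV[R]_d -> 'cV[R]_d) c, 0 < c -> econt F ->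
  (forall x x', c * sqnorm (x - x') <= dotv (F x - F x') (x - x')) -> exists x, F x = 0.
Proof.
elim: d => [|d IH] F0 c c0 Fc0 Fm0.
  by exists 0; apply: flatmx0.
suff step : forall F : 'cV[R]_(1 + d) -> 'cV[R]_(1 + d), econt F ->
  (forall x x', c * sqnorm (x - x') <= dotv (F x - F x') (x - x')) -> exists x, F x = 0.
  exact: step.
move=> F Fc Fm.
pose X (s : R) (u : 'cV[R]_d) : 'cV[R]_(1 + d) := col_mx (s%:M) u.
pose Fd s u := dsubmx (F (X s u)).
have scB : forall s t : R, ((s%:M - t%:M) : 'cV[R]_1) 0 0 = s - t.
  by move=> s t; rewrite !mxE !eqxx !mulr1n.
have sqX : forall s t u v, sqnorm (X s u - X t v) = (s - t) ^+ 2 + sqnorm (u - v).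
  move=> s t u v; rewrite /X col_mxB' /sqnorm dotv_split col_mxKu col_mxKd dotv1.
  by rewrite scB expr2.
have Fdm : forall s u v, c * sqnorm (u - v) <= dotv (Fd s u - Fd s v) (u - v).
  move=> s u v; have := Fm (X s u) (X s v).
  rewrite sqX subrr expr2 mul0r add0r dotv_split !usubmxB !dsubmxB /X.
  by rewrite !col_mxKu !col_mxKd subrr dotvC dotv0l add0r.
have Fdc : forall s, econt (Fd s).
  move=> s u e e0; have [dl dl0 hl] := Fc (X s u) e e0; exists dl => // v hv.
  rewrite /Fd -dsubmxB; apply: le_lt_trans (sq_dsub _) _; apply: hl.
  by rewrite sqX subrr expr2 mul0r add0r.
have hU : forall s, exists u, Fd s u = 0 := fun s => IH (Fd s) c c0 (Fdc s) (Fdm s).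
pose U s := proj1_sig (cid (hU s)).
have UP : forall s, Fd s (U s) = 0 := fun s => proj2_sig (cid (hU s)).
have c2 : 0 < c ^+ 2 by rewrite exprn_gt0.
have Ub : forall s t, sqnorm (U s - U t) <= sqnorm (F (X s (U t)) - F (X t (U t))) / c ^+ 2.
  move=> s t; apply: le_trans (sol_bound c0 (Fdm s) (UP s) (UP t)) _.
  rewrite ler_pM2r ?invr_gt0 // /Fd -dsubmxB; exact: sq_dsub.
pose h s := usubmx (F (X s (U s))) 0 0.
have hmono : forall s t, c * (s - t) ^+ 2 <= (h s - h t) * (s - t).
  move=> s t; have := Fm (X s (U s)) (X t (U t)).
  rewrite sqX dotv_split usubmxB dsubmxB.
  have -> : dsubmx (F (X s (U s))) = 0 := UP s.
  have -> : dsubmx (F (X t (U t))) = 0 := UP t.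
  have E : (usubmx (F (X s (U s))) - usubmx (F (X t (U t)))) 0 0 = h s - h t.
    by rewrite /h !mxE.
  rewrite subrr dotv0l addr0 dotv1 E /X usubmxB !col_mxKu scB.
  have := sq_ge0 (U s - U t); move: (h s) (h t) => a b; nra.
have hcont : forall t e, 0 < e -> exists2 dd, 0 < dd & forall s, (s - t) ^+ 2 < dd -> (h s - h t) ^+ 2 < e.
  move=> t e e0.
  have [d1 d10 h1] := Fc (X t (U t)) e e0.
  have e2 : 0 < c ^+ 2 * d1 / 2 by rewrite divr_gt0 // mulr_gt0.
  have [d2 d20 h2] := Fc (X t (U t)) _ e2.
  exists (Num.min (d1 / 2) d2); first by rewrite lt_min d20 divr_gt0.
  move=> s; rewrite lt_min => /andP [hs1 hs2].
  have hb : sqnorm (X s (U s) - X t (U t)) < d1.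
    rewrite sqX.
    have hA : sqnorm (F (X s (U t)) - F (X t (U t))) < c ^+ 2 * d1 / 2.
      by apply: h2; rewrite sqX subrr /sqnorm dotv0l addr0.
    have hB : sqnorm (F (X s (U t)) - F (X t (U t))) / c ^+ 2 < d1 / 2.
      rewrite ltr_pdivrMr //; apply: (lt_le_trans hA); rewrite (_ : c ^+ 2 * d1 / 2 = d1 / 2 * c ^+ 2) //; ring.
    have := Ub s t; lra.
  have := h1 _ hb.
  apply: le_lt_trans; apply: le_trans (sq_usub _).
  have -> : h s - h t = usubmx (F (X s (U s)) - F (X t (U t))) 0 0 by rewrite /h !mxE.
  exact: sq_entry.
have hc : continuous h := econt1_lib hcont.
have [s0 hs0] : exists s0, h s0 = 0.
  case: (leP (h 0) 0) => ha.
    pose b := - h 0 / c + 1.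
    have bE : c * b = - h 0 + c by rewrite /b mulrDr mulr1 mulrC divfK ?gt_eqF.
    have b0 : 0 < b.
      rewrite /b; have : 0 <= - h 0 / c by rewrite divr_ge0 ?oppr_ge0 // ltW.
      lra.
    have hb : 0 <= h b.
      have := hmono b 0; rewrite subr0; nra.
    have hbd : Num.min (h 0) (h b) <= 0 <= Num.max (h 0) (h b).
      by rewrite ge_min le_max ha hb orbT.
    have [s hs1 hs2] := @IVT R h 0 b 0 (ltW b0) (continuous_subspaceT hc) hbd.
    by exists s.
  pose b := - (h 0 / c) - 1.
  have bE : c * b = - h 0 - c by rewrite /b mulrBr mulr1 mulrN mulrC divfK ?gt_eqF.
  have b0 : b < 0.
    rewrite /b; have : 0 <= h 0 / c by rewrite divr_ge0 // ltW.
    lra.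
  have hb : h b <= 0.
    have := hmono 0 b; rewrite sub0r; nra.
  have hbd : Num.min (h b) (h 0) <= 0 <= Num.max (h b) (h 0).
    by rewrite ge_min le_max hb (ltW ha) orbT.
  have [s hs1 hs2] := @IVT R h b 0 0 (ltW b0) (continuous_subspaceT hc) hbd.
  by exists s.
exists (X s0 (U s0)).
rewrite -[F _]vsubmxK.
have -> : dsubmx (F (X s0 (U s0))) = 0 := UP s0.
have -> : usubmx (F (X s0 (U s0))) = 0.
  apply/matrixP => i j; rewrite (ord1 i) (ord1 j) [RHS]mxE; exact: hs0.
exact: col_mx0.
Qed.

Lemma grp_id (V : zmodType) (a a' b c c' : V) : a + b + c - (a' + b + c') = (a - a') + (c - c').
Proof. by rewrite opprD addrACA opprD [X in X + _]addrACA subrr addr0. Qed.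

Lemma col_mulE {R : realType} p q s (A : 'M[R]_(p, q)) (B : 'M[R]_(q, s)) j :
  A *m col j B = col j (A *m B).
Proof. by apply/matrixP => a b; rewrite !mxE; apply: eq_bigr => l _; rewrite !mxE. Qed.

Lemma cont_l {R : realType} m n (f : 'cV[R]_m -> 'cV[R]_n -> 'cV[R]_m) y :
  continuous (fun p : 'cV[R]_m * 'cV[R]_n => f p.1 p.2) -> continuous (fun x => f x y).
Proof.
move=> fc x.
apply: (continuous_comp (f := fun x => (x, y)) (g := fun p => f p.1 p.2)); last exact: fc.
exact: (cvg_pair (F := nbhs x) (G := nbhs x) (H := nbhs y) cvg_id (cvg_cst y)).
Qed.

Lemma cont_r {R : realType} m n (f : 'cV[R]_m -> 'cV[R]_n -> 'cV[R]_m) x :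
  continuous (fun p : 'cV[R]_m * 'cV[R]_n => f p.1 p.2) -> continuous (fun y => f x y).
Proof.
move=> fc y.
apply: (continuous_comp (f := fun y => (x, y)) (g := fun p => f p.1 p.2)); last exact: fc.
exact: (cvg_pair (F := nbhs y) (G := nbhs x) (H := nbhs y) (cvg_cst x) cvg_id).
Qed.

Unset Implicit Arguments.

Theorem lemma3 (R : realType) (m n k : nat)
  (M : 'M[R]_(m, k)) (P : 'M[R]_k)
  (f : 'cV[R]_m -> 'cV[R]_n -> 'cV[R]_m) (r : 'cV[R]_n -> 'cV[R]_k) :
  projector_along_ker M P ->
  continuous (fun p : 'cV[R]_m * 'cV[R]_n => f p.1 p.2) ->
  strongly_monotone_x f ->
  continuous r ->
  exists g : 'cV[R]_n -> 'cV[R]_k,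
    continuous g /\
    forall (z : 'cV[R]_k) (y : 'cV[R]_n),
      M^T *m f (M *m z) y + P^T *m r y = 0 <-> P *m z = g y.
Proof.
move=> [PP Pker] fc [c [c0 fm]] rc.
have MPz : forall z : 'cV[R]_k, M *m (P *m z) = M *m z.
  move=> z; apply: subr0_eq; rewrite -mulmxBr; apply/(Pker _).1.
  by rewrite mulmxBr mulmxA PP subrr.
have [L PL] : exists L : 'M[R]_(k, m), P = L *m (M *m P).
  apply/submxP; rewrite submxE; apply/eqP.
  set C := cokermx (M *m P).
  apply/matrixP => i j.
  have h1 : M *m (P *m col j C) = 0.
    rewrite mulmxA col_mulE mulmx_coker; apply/matrixP => a b; rewrite !mxE //.
  have h2 : P *m col j C = 0.
    have := (Pker (P *m col j C)).2 h1; by rewrite mulmxA PP.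
  have := congr1 (fun A : 'cV[R]_k => A i 0) h2; rewrite col_mulE !mxE => ->.
  by [].
have [K K0 hK] := lin_bound L.
have PK : forall v : 'cV[R]_k, sqnorm (P *m v) <= K * sqnorm (M *m (P *m v)).
  by move=> v; rewrite {1}PL -!mulmxA; apply: hK.
pose Q : 'M[R]_k := 1%:M - P.
have QP : forall z : 'cV[R]_k, Q *m (P *m z) = 0.
  by move=> z; rewrite mulmxA /Q mulmxBl mul1mx PP subrr mul0mx.
pose G (y : 'cV[R]_n) (w : 'cV[R]_k) :=
  M^T *m f (M *m (P *m w)) y + P^T *m r y + Q^T *m (Q *m w).
pose mc := Num.min c 1.
have mc0 : 0 < mc by rewrite lt_min c0 ltr01.
have mcc : mc <= c by rewrite ge_min lexx.
have mc1 : mc <= 1 by rewrite ge_min lexx orbT.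
pose c' := mc / (2 * (K + 1)).
have c'0 : 0 < c' by rewrite divr_gt0 // mulr_gt0 //; lra.
have Gm : forall y w w', c' * sqnorm (w - w') <= dotv (G y w - G y w') (w - w').
  move=> y w w'.
  have -> : G y w - G y w' = M^T *m (f (M *m (P *m w)) y - f (M *m (P *m w')) y)
      + Q^T *m (Q *m (w - w')).
    by rewrite /G grp_id !mulmxBr.
  rewrite dotvDl !dotv_tr.
  have -> : M *m (w - w') = M *m (P *m w) - M *m (P *m w') by rewrite !MPz mulmxBr.
  have h1 := fm y (M *m (P *m w)) (M *m (P *m w')).
  have h2 : sqnorm (w - w') <= 2 * sqnorm (P *m (w - w')) + 2 * sqnorm (Q *m (w - w')).
    have {1}-> : w - w' = P *m (w - w') + Q *m (w - w') by rewrite /Q mulmxBl mul1mx [RHS]addrC subrK.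
    exact: sqD2.
  have h3 := PK (w - w'); rewrite [in X in _ <= X]mulmxBr [in X in _ <= X]mulmxBr in h3.
  rewrite -/(sqnorm (Q *m (w - w'))).
  move: h1 h2 h3.
  set A := sqnorm (M *m (P *m w) - M *m (P *m w')).
  set B := sqnorm (Q *m (w - w')).
  set S := sqnorm (w - w').
  set SP := sqnorm (P *m (w - w')).
  set T := dotv _ _ => h1 h2 h3.
  have A0 : 0 <= A := sq_ge0 _.
  have B0 : 0 <= B := sq_ge0 _.
  have e1 : c' * (2 * (K + 1)) = mc by rewrite /c' divfK // mulf_neq0 // gt_eqF //; lra.
  have h4 : c' * S <= c' * (2 * (K + 1) * (A + B)).
    rewrite ler_wpM2l ?(ltW c'0) //; nra.
  rewrite mulrA e1 in h4.
  nra.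
have Gc : forall y, econt (G y).
  move=> y.
  have e1 : econt (fun w : 'cV[R]_k => M^T *m f (M *m (P *m w)) y).
    apply: (econt_comp (F := fun v => M^T *m v)); first exact: econt_lin.
    apply: (econt_comp (F := fun x => f x y)); first exact: lib_econt (cont_l fc).
    apply: (econt_comp (F := fun v => M *m v)); first exact: econt_lin.
    exact: econt_lin.
  have e2 : econt (fun w : 'cV[R]_k => Q^T *m (Q *m w)).
    apply: (econt_comp (F := fun v => Q^T *m v)); first exact: econt_lin.
    exact: econt_lin.
  exact: (econt_add (econt_add e1 (econt_cst _)) e2).
have hz : forall y, exists w, G y w = 0 := fun y => exists_zero c'0 (Gc y) (Gm y).
pose g y := proj1_sig (cid (hz y)).
have gP : forall y, G y (g y) = 0 := fun y => proj2_sig (cid (hz y)).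
exists g; split.
  apply: econt_lib => p e e0.
  have hcont : econt (fun q => G q (g p)).
    have e1 : econt (fun q : 'cV[R]_n => M^T *m f (M *m (P *m g p)) q).
      apply: (econt_comp (F := fun v => M^T *m v)); first exact: econt_lin.
      exact: lib_econt (cont_r fc).
    have e2 : econt (fun q : 'cV[R]_n => P^T *m r q).
      apply: (econt_comp (F := fun v => P^T *m v)); first exact: econt_lin.
      exact: lib_econt rc.
    exact: (econt_add (econt_add e1 e2) (econt_cst _)).
  have ec : 0 < e * c' ^+ 2 by rewrite mulr_gt0 // exprn_gt0.
  have [dd dd0 hd] := hcont p _ ec.
  exists dd => // q hq.
  apply: le_lt_trans (sol_bound c'0 (Gm q) (gP q) (gP p)) _.
  by rewrite ltr_pdivrMr ?exprn_gt0 //; apply: hd.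
move=> z y; split.
  move=> H.
  have Gz : G y (P *m z) = 0.
    by rewrite /G !MPz QP mulmx0 addr0.
  have := sol_bound c'0 (Gm y) Gz (gP y).
  rewrite subrr /sqnorm dotv0l mul0r => h.
  by apply/eqP; rewrite -subr_eq0; apply/eqP; apply: sq_eq0.
move=> H.
by have := gP y; rewrite /G -H !MPz QP mulmx0 addr0.
Qed.
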